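(* Consider the MT-model on $\mathbb{T}_d$, $d\ge2$, and let $N$ be the number of neighbours of the root that are ever informed (the number of spreaders generated by the initial spreader). Then $$\mathbb{P}(N=i)=i!\binom{d+1}{i}\frac{i}{(d+1)^{i+1}},\qquad i\in\{1,\dots,d+1\},$$ and $N\in\{1,\dots,d+1\}$ almost surely.
   Context: Let $d\ge 2$ and let $\mathbb{T}_d$ be the infinite tree in which every vertex has degree $d+1$, with root $\mathbf 0$. The MT-model on $\mathbb{T}_d$ is the continuous-time Markov process $(\eta_t)_{t\ge0}$ on $\{-1,0,1\}^{\mathbb{T}_d}$ ($-1$ = ignorant, $0$ = spreader, $1$ = stifler) in which a vertex in state $-1$ jumps to $0$ at rate equal to its number of neighbours in state $0$, and a vertex in state $0$ jumps to $1$ at rate equal to its number of neighbours in states $\{0,1\}$ (equivalently, each spreader contacts each neighbour at rate 1, informing ignorants and becoming a stifler upon contacting a non-ignorant). Initially $\eta_0(\mathbf 0)=0$ and all other vertices are in state $-1$. *)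

(* Defs.v *)
From HB Require Import structures.
From mathcomp Require Import all_boot all_order all_algebra.
From mathcomp Require Import all_classical all_reals all_analysis.
Set Implicit Arguments. Unset Strict Implicit. Unset Printing Implicit Defensive.
Import Order.TTheory GRing.Theory Num.Theory.
Local Open Scope ring_scope.

(* Vertices of T_d: words over nat.  The root is [::]; its d+1 children are
   [:: a] (a < d+1); every other vertex v has parent (drop last) and d
   children rcons v b (b < d).  So every vertex has degree d+1. *)
Definition vertex := seq nat.
Definition root : vertex := [::].

Definition neighbours (d : nat) (v : vertex) : seq vertex :=
  if v is [::] then [seq [:: a] | a <- iota 0 d.+1]
  else take (size v).-1 v :: [seq rcons v b | b <- iota 0 d].

(* A configuration: st = state (-1 ignorant, 0 spreader, 1 stifler);
   supp = list of the (finitely many) non-ignorant vertices. *)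
Record config := Config { st : vertex -> int; supp : seq vertex }.

Definition init_config : config :=
  Config (fun v => if v == root then 0 else -1) [:: root].

Definition update (f : vertex -> int) (x : vertex) (a : int) : vertex -> int :=
  fun y => if y == x then a else f y.

Definition spreaders (c : config) : seq vertex := [seq u <- supp c | st c u == 0].

(* all (spreader, neighbour) directed contacts; each occurs at rate 1 *)
Definition contacts (d : nat) (c : config) : seq (vertex * vertex) :=
  [seq (u, v) | u <- spreaders c, v <- neighbours d u].

Definition contact (c : config) (uv : vertex * vertex) : config :=
  let: (u, v) := uv in
  if st c v == -1 then Config (update (st c) v 0) (v :: supp c)
  else Config (update (st c) u 1) (supp c).

(* Embedded jump chain of the MT-model: from c, each contact is chosen with
   probability 1 / (total rate) = 1 / size (contacts d c); configurations
   without spreaders are absorbing.  expect d n f c = E_c[ f(eta_n) ]. *)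
Fixpoint expect {R : realType} (d n : nat) (f : config -> R) (c : config) : R :=
  match n with
  | 0 => f c
  | n'.+1 =>
      let P := contacts d c in
      if P is [::] then f c
      else \sum_(p <- P) (size P)%:R^-1 * expect d n' f (contact c p)
  end.

Definition Nroot (d : nat) (c : config) : nat :=
  count (fun v => st c v != -1) (neighbours d root).

Definition probN (R : realType) (d n : nat) (A : pred nat) : R :=
  expect d n (fun c => if A (Nroot d c) then 1 else 0) init_config.

(* Main.v *)
Require Import Defs.
From HB Require Import structures.
From mathcomp Require Import all_boot all_order all_algebra.
From mathcomp Require Import all_classical all_reals all_analysis.
From mathcomp Require Import ring lra.
Import Order.TTheory GRing.Theory Num.Theory.
Import numFieldNormedType.Exports.
Set Implicit Arguments. Unset Strict Implicit.
Local Open Scope classical_set_scope.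
Local Open Scope ring_scope.

Section Comb.
Variable d : nat.

Definition rn : seq vertex := neighbours d Defs.root.

Lemma rnE : rn = [seq [:: a] | a <- iota 0 d.+1].
Proof. by []. Qed.

Lemma rn_size1 v : v \in rn -> size v = 1%N.
Proof. by rewrite rnE => /mapP [a _] ->. Qed.

Lemma vroot_notin_rn : Defs.root \notin rn.
Proof. by apply/negP => /rn_size1. Qed.

Lemma rn_uniq : uniq rn.
Proof. rewrite rnE map_inj_uniq ?iota_uniq //; by move=> a b [->]. Qed.

Lemma size_rn : size rn = d.+1.
Proof. by rewrite /rn /= size_map size_iota. Qed.

Lemma size_neigh v : size (neighbours d v) = d.+1.
Proof. by case: v => [|a v] /=; rewrite ?size_map size_iota. Qed.

Definition parent (v : vertex) : vertex := take (size v).-1 v.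

Definition minv (c : config) :=
  [/\ uniq (supp c), (forall v, v \in supp c -> st c v != -1), Defs.root \in supp c,
     (forall u, u != Defs.root -> st c u != -1 -> st c (parent u) != -1)
   & (st c Defs.root != 0 -> (0 < Nroot d c)%N)].

Lemma inv_init : minv init_config.
Proof.
split => /=.
- by [].
- by move=> v; rewrite inE => /eqP ->; rewrite eqxx.
- by rewrite inE.
- by move=> u /negbTE ->; rewrite eqxx.
- by rewrite ?eqxx.
Qed.

Lemma Nroot_le c : (Nroot d c <= d.+1)%N.
Proof. by rewrite /Nroot -[X in (_ <= X)%N]size_rn count_size. Qed.

Lemma count_bump (T : eqType) (a a' : pred T) (s : seq T) x :
  uniq s -> x \in s -> a x = false -> a' x = true ->
  (forall y, y \in s -> y != x -> a' y = a y) ->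
  count a' s = (count a s).+1.
Proof.
elim: s => [//|y s IH] /= /andP [ys us]; rewrite inE => xin ax a'x H.
case: (eqVneq x y) => [exy|nxy].
  subst y; rewrite ax a'x /= add0n add1n; congr S.
  apply: eq_in_count => z zs; apply: H; first by rewrite inE zs orbT.
  by apply: contraNneq ys => <-.
move: xin; rewrite (negbTE nxy) /= => xin.
rewrite (IH us xin ax a'x); last first.
  by move=> z zs; apply: H; rewrite inE zs orbT.
rewrite H ?inE ?eqxx //; first by rewrite addnS.
by rewrite eq_sym.
Qed.

Lemma Nroot_mono c c' : (forall y, st c y != -1 -> st c' y != -1) ->
  (Nroot d c <= Nroot d c')%N.
Proof. by move=> H; apply: sub_count => y /= /H. Qed.

Lemma spreaders_uniq c : minv c -> uniq (spreaders c).
Proof. by case=> u *; apply: filter_uniq. Qed.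

Lemma spr_st {c u} : u \in spreaders c -> st c u = 0.
Proof. by rewrite mem_filter => /andP [/eqP]. Qed.

Lemma spr_supp {c u} : u \in spreaders c -> u \in supp c.
Proof. by rewrite mem_filter => /andP []. Qed.

Lemma vroot_spr c : minv c -> (Defs.root \in spreaders c) = (st c Defs.root == 0).
Proof. by case=> _ _ r _ _; rewrite mem_filter r andbT. Qed.

Lemma nonroot_neigh c u v : minv c -> u \in spreaders c -> u != Defs.root ->
  v \in neighbours d u -> st c v == -1 -> v \notin rn.
Proof.
case=> _ _ _ I4 _ us ur; case: u ur us => [//|a u] _ us /=.
rewrite inE => /orP [/eqP ->|].
  have := I4 (a :: u) isT; rewrite (spr_st us) => /(_ isT).
  by rewrite /parent => /negbTE ->.
move=> /mapP [b _] -> _; apply/negP => /rn_size1.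
move=> /=; rewrite size_rcons; by [].
Qed.

Lemma parent_neigh c u v : minv c -> u \in spreaders c ->
  v \in neighbours d u -> st c v == -1 -> parent v = u.
Proof.
case=> _ _ _ I4 _; case: u => [|a u] us.
  by change (v \in rn -> st c v == -1 -> parent v = [::]); rewrite rnE => /mapP [b _] ->.
rewrite /=.
rewrite inE => /orP [/eqP ->|].
  have := I4 (a :: u) isT; rewrite (spr_st us) => /(_ isT).
  by rewrite /parent => /negbTE ->.
move=> /mapP [b _] -> _; rewrite /parent /= size_rcons /= -cats1 take_size_cat //.
Qed.

Lemma inv_contact c p : minv c -> p \in contacts d c -> minv (contact c p).
Proof.
move=> ic /allpairsPdep [u [v [us vn ->]]].
have stu := spr_st us.
have ic' := ic; case: ic' => I1 I2 I3 I4 I5.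
rewrite /contact; case: ifP => hv.
- have vsupp : v \notin supp c by apply/negP => /I2; rewrite hv.
  have vr : v != Defs.root by apply: contraNneq vsupp => ->.
  have mono : forall y, st c y != -1 -> update (st c) v 0 y != -1.
    by move=> y; rewrite /update; case: ifP.
  split => /=.
  + by rewrite vsupp.
  + move=> w; rewrite inE /update; case: ifP => // _ /= /I2 //.
  + by rewrite inE I3 orbT.
  + move=> w wr; rewrite {1}/update; case: ifP => [/eqP ->|_] hw.
      rewrite (@parent_neigh c u v ic us vn hv); apply: mono; by rewrite stu.
    by apply: mono; apply: I4.
  + have vr2 : (Defs.root == v) = false by rewrite eq_sym (negbTE vr).
    rewrite /update vr2.
    move=> /I5 h; apply: leq_trans h _; apply: Nroot_mono => y /=.
    exact: mono.
- have equiv : forall y, (update (st c) u 1 y != -1) = (st c y != -1).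
    by move=> y; rewrite /update; case: ifP => // /eqP ->; rewrite stu.
  have NN : Nroot d (Config (update (st c) u 1) (supp c)) = Nroot d c.
    by apply: eq_count => y /=; rewrite equiv.
  split => //=.
  + by move=> w ws; rewrite equiv I2.
  + by move=> w wr; rewrite !equiv; apply: I4.
  + rewrite NN /update; case: ifP => [/eqP ur|_ /I5 //] _.
    subst u; rewrite /Nroot -has_count; apply/hasP; exists v => //.
    by rewrite hv.
Qed.

End Comb.


Section Sums.
Variable R : realFieldType.
Variable d : nat.

Lemma sum_const_seq (T : Type) (s : seq T) (P : pred T) (x : R) :
  \sum_(i <- s | P i) x = (count P s)%:R * x.
Proof.
elim: s => [|y s IH]; first by rewrite big_nil mul0r.
rewrite big_cons IH /=; case: (P y) => /=; last by rewrite add0n.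
by rewrite add1n mulrS mulrDl mul1r.
Qed.

Definition FF (Phi : bool -> nat -> R) c := Phi (st c Defs.root == 0) (Nroot d c).

Lemma size_contacts c : size (contacts d c) = (d.+1 * size (spreaders c))%N.
Proof.
rewrite /contacts; elim: (spreaders c) => [|u s IH] /=; first by rewrite muln0.
by rewrite size_cat size_map size_neigh IH mulnS.
Qed.

Lemma root_inner Phi c : minv d c -> st c Defs.root == 0 ->
  \sum_(v <- rn d) FF Phi (contact c (Defs.root, v)) =
  (d.+1 - Nroot d c)%:R * Phi true (Nroot d c).+1 + (Nroot d c)%:R * Phi false (Nroot d c).
Proof.
move=> ic rs; have ic' := ic; case: ic' => I1 I2 I3 I4 I5.
rewrite (bigID (fun v => st c v == -1)) /=; congr (_ + _); last first.
  rewrite big_seq_cond (eq_bigr (fun _ => Phi false (Nroot d c))); last first.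
    move=> v /andP [vr hv]; rewrite /contact (negbTE hv) /FF /= /update eqxx /=.
    congr (Phi _ _); apply: eq_in_count => y yr /=.
    have : y != Defs.root by apply: contraNneq (vroot_notin_rn d) => <-.
    by move=> /negbTE ->.
  rewrite sum_const_seq; congr (_%:R * _).
  rewrite /Nroot; apply: eq_in_count => y yr /=; by rewrite yr.
rewrite big_seq_cond (eq_bigr (fun _ => Phi true (Nroot d c).+1)); last first.
  move=> v /andP [vr hv]; rewrite /contact hv /FF /= /update.
  have -> : (Defs.root == v) = false.
    by apply/negbTE; apply: contraNneq (vroot_notin_rn d) => ->.
  rewrite rs; congr (Phi _ _).
  rewrite /Nroot /=; apply: (@count_bump _ _ _ _ v (rn_uniq d) vr) => //=.
  - by rewrite hv.
  - by rewrite eqxx.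
  - by move=> y _ /negbTE ->.
rewrite sum_const_seq; congr (_%:R * _).
have := count_predC (fun v => st c v != -1) (rn d).
rewrite size_rn /Nroot => <-; rewrite addKn; apply: eq_in_count => y yr /=.
by rewrite yr negbK.
Qed.

Lemma nonroot_same Phi c u v : minv d c -> u \in spreaders c -> u != Defs.root ->
  v \in neighbours d u -> FF Phi (contact c (u, v)) = FF Phi c.
Proof.
move=> ic us ur vn; have ic' := ic; case: ic' => I1 I2 I3 I4 I5.
rewrite /contact /FF; case: ifP => hv /=.
  have vrn := @nonroot_neigh d c u v ic us ur vn hv.
  have vr : (Defs.root == v) = false.
    apply/negbTE; apply/negP => /eqP e; have := I2 _ I3; by rewrite e hv.
  rewrite /update vr; congr (Phi _ _); apply: eq_in_count => y yr /=.
  have : y != v by apply: contraNneq vrn => <-.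
  by move=> /negbTE ->.
have stu := spr_st us.
have ur2 : (Defs.root == u) = false by rewrite eq_sym (negbTE ur).
rewrite /update ur2; congr (Phi _ _); apply: eq_count => y /=.
by case: ifP => // /eqP ->; rewrite stu.
Qed.

Lemma inner_const Phi c u : minv d c -> u \in spreaders c -> u != Defs.root ->
  \sum_(v <- neighbours d u) FF Phi (contact c (u, v)) = (d.+1)%:R * FF Phi c.
Proof.
move=> ic us ur; rewrite big_seq (eq_bigr (fun _ => FF Phi c)).
  by rewrite -big_seq sum_const_seq count_predT size_neigh.
by move=> v vn; apply: nonroot_same.
Qed.

Lemma nzA n : (1 + n%:R : R) != 0.
Proof. by apply: lt0r_neq0; have := ler0n R n; lra. Qed.
Lemma nzB n : (n%:R + 1 : R) != 0.
Proof. by apply: lt0r_neq0; have := ler0n R n; lra. Qed.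

Lemma step_sum Phi c : minv d c -> spreaders c != [::] ->
  \sum_(p <- contacts d c) (size (contacts d c))%:R^-1 * FF Phi (contact c p) =
  if st c Defs.root == 0 then
    (size (spreaders c))%:R^-1 * ((d.+1)%:R^-1 *
       ((d.+1 - Nroot d c)%:R * Phi true (Nroot d c).+1 + (Nroot d c)%:R * Phi false (Nroot d c)))
    + (1 - (size (spreaders c))%:R^-1) * Phi true (Nroot d c)
  else Phi false (Nroot d c).
Proof.
move=> ic sne; have ic' := ic; case: ic' => I1 I2 I3 I4 I5.
have su := spreaders_uniq ic.
set S := size (spreaders c).
have S0 : (0 < S)%N by rewrite lt0n size_eq0.
rewrite -big_distrr /= /contacts big_allpairs_dep /=.
rewrite size_contacts -/S.
have D0 : (d.+1)%:R != 0 :> R by rewrite pnatr_eq0.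
have S0' : S%:R != 0 :> R by rewrite pnatr_eq0 -lt0n.
case: ifP => rs.
  have rspr : Defs.root \in spreaders c by rewrite (@vroot_spr d c ic).
  rewrite (perm_big _ (perm_to_rem rspr)) big_cons.
  rewrite (@root_inner Phi c ic rs).
  rewrite big_seq (eq_bigr (fun _ => (d.+1)%:R * FF Phi c)); last first.
    move=> u; rewrite (mem_rem_uniq _ su) => /andP [ur us].
    exact: inner_const.
  rewrite -big_seq sum_const_seq count_predT size_rem // -/S.
  rewrite /FF rs.
  move: S0 S0'; case: S => [//|S'] _ S0'.
  rewrite /= natrM -[S'.+1]addn1 natrD.
  set A := (_ * Phi true _ + _).
  set X := Phi true _.
  by field; rewrite ?nzA ?nzB ?S0'.
rewrite big_seq (eq_bigr (fun _ => (d.+1)%:R * FF Phi c)); last first.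
  move=> u us; apply: inner_const => //.
  by apply: contraFneq rs => e; rewrite -((@vroot_spr d c ic)) -e.
rewrite -big_seq sum_const_seq count_predT -/S /FF rs natrM.
by field; rewrite ?nzA ?nzB ?S0'.
Qed.

End Sums.


Section Expect.
Variable R : realType.
Variable d : nat.

Lemma contacts_nil c : minv d c -> contacts d c = [::] -> st c Defs.root != 0.
Proof.
move=> ic E; have := size_contacts d c; rewrite E => /esym /eqP.
rewrite muln_eq0 /= size_eq0 => /eqP sn.
by rewrite -(vroot_spr ic) sn.
Qed.

Lemma spr_nonnil c p P : contacts d c = p :: P -> spreaders c != [::].
Proof.
move=> E; have := size_contacts d c; rewrite E /=.
by case: (spreaders c) => //=; rewrite muln0.
Qed.

Lemma expect_harm (Phi : bool -> nat -> R) :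
  (forall N, (N <= d.+1)%N ->
     (d.+1)%:R^-1 * ((d.+1 - N)%:R * Phi true N.+1 + N%:R * Phi false N) = Phi true N) ->
  forall n c, minv d c -> expect d n (FF d Phi) c = FF d Phi c.
Proof.
move=> H; elim=> [//|n IH] c ic /=.
case E: (contacts d c) => [//|p P]; rewrite -E.
rewrite big_seq (eq_bigr (fun p => (size (contacts d c))%:R^-1 * FF d Phi (contact c p))); last first.
  by move=> q qc; rewrite IH //; apply: inv_contact.
rewrite -big_seq step_sum //; last exact: spr_nonnil E.
rewrite /FF; case: ifP => // rs.
by rewrite H ?Nroot_le //; ring.
Qed.

Lemma expect_cmp (f g h : config -> R) :
  (forall c, minv d c -> `|f c - g c| <= h c) ->
  forall n c, minv d c -> `|expect d n f c - expect d n g c| <= expect d n h c.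
Proof.
move=> H; elim=> [|n IH] c ic /=; first exact: H.
case E: (contacts d c) => [|p P]; first exact: H.
rewrite -E -sumrB; apply: le_trans (ler_norm_sum _ _ _) _.
rewrite big_seq [X in _ <= X]big_seq; apply: ler_sum => q qc.
rewrite -mulrBr normrM ger0_norm ?invr_ge0 ?ler0n //.
apply: ler_wpM2l; first by rewrite invr_ge0 ler0n.
by apply: IH; apply: inv_contact.
Qed.

Fixpoint gpr (s n : nat) : R :=
  if n is n'.+1 then (1 - (2 * s%:R)^-1) * gpr s.+1 n' else 1.

Lemma fac_ge0 s : (0 < s)%N -> 0 <= 1 - (2 * s%:R : R)^-1.
Proof.
move=> s0; rewrite subr_ge0 invf_le1 //.
  have : 1 <= s%:R :> R by rewrite ler1n.
  lra.
have : 1 <= s%:R :> R by rewrite ler1n.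
lra.
Qed.

Lemma gpr_ge0 n : forall s, (0 < s)%N -> 0 <= gpr s n.
Proof.
elim: n => [|n IH] s s0 /=; first by [].
by apply: mulr_ge0; [apply: fac_ge0 | apply: IH].
Qed.

Lemma gpr_sq n : forall s, (0 < s)%N -> gpr s n ^+ 2 <= s%:R / (s + n)%:R.
Proof.
elim: n => [|n IH] s s0 /=.
  by rewrite expr1n addn0 divff // pnatr_eq0 -lt0n.
rewrite exprMn.
have h := IH s.+1 isT.
have ts : 1 <= s%:R :> R by rewrite ler1n.
set t := s%:R in ts *.
have e1 : (s.+1 + n)%:R = t + 1 + n%:R :> R by rewrite /t -[s.+1]addn1 !natrD.
have e2 : (s + n.+1)%:R = t + 1 + n%:R :> R by rewrite /t -[n.+1]addn1 !natrD; ring.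
have e3 : s.+1%:R = t + 1 :> R by rewrite /t -[s.+1]addn1 natrD.
rewrite e2; rewrite e1 e3 in h.
have n0 : 0 <= n%:R :> R by rewrite ler0n.
set g := gpr _ _ in h *.
set m := n%:R in n0 h *.
apply: le_trans (_ : (1 - (2 * t)^-1) ^+ 2 * ((t + 1) / (t + 1 + m)) <= _).
  apply: ler_wpM2l; first by rewrite sqr_ge0.
  by [].
set y := (2 * t)^-1.
have hy : y * (2 * t) = 1 by rewrite mulVf //; lra.
have y0 : 0 < y by rewrite invr_gt0; lra.
have y1 : y <= 1/2 by nra.
rewrite mulrA ler_pM2r; last by rewrite invr_gt0; lra.
nra.
Qed.


Definition PhiPsi (K : R) (b : bool) (N : nat) : R := if b then K / 2 ^+ N else 0.

Lemma supp_contact c p : (size (supp (contact c p)) <= (size (supp c)).+1)%N.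
Proof. by case: p => u v; rewrite /contact; case: ifP. Qed.

Lemma step_ineq (a b0 c x t : R) : 0 <= x -> 0 <= b0 * c -> b0 * c <= 1 -> 0 < a -> a <= 1 ->
  2 * t <= a -> a * (b0 * (c * (x / 2))) + (1 - a) * x <= x * (1 - t).
Proof.
rewrite [b0 * (c * _)]mulrA; set b := b0 * c.
move=> x0 b0' b1 a0 a1 ta.
have h1 : a * (b * (x / 2)) <= a * (x / 2).
  apply: ler_wpM2l; first lra.
  apply: ler_piMl => //; lra.
nra.
Qed.

Lemma psi_bound K : 0 <= K -> forall n c s, minv d c -> (0 < s)%N ->
  (size (supp c) <= s)%N ->
  expect d n (FF d (PhiPsi K)) c <= FF d (PhiPsi K) c * gpr s n.
Proof.
move=> K0; elim=> [|n IH] c s ic s0 ss /=; first by rewrite mulr1.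
case E: (contacts d c) => [|p P].
  by rewrite /FF (negbTE (contacts_nil ic E)) /PhiPsi mul0r.
rewrite -E.
apply: le_trans (_ : \sum_(q <- contacts d c) (size (contacts d c))%:R^-1 *
   (FF d (PhiPsi K) (contact c q) * gpr s.+1 n) <= _).
  rewrite big_seq [X in _ <= X]big_seq; apply: ler_sum => q qc.
  apply: ler_wpM2l; first by rewrite invr_ge0 ler0n.
  apply: IH => //; first exact: inv_contact.
  by apply: leq_trans (supp_contact c q) _; rewrite ltnS.
under eq_bigr do rewrite mulrA.
rewrite -big_distrl /= step_sum //; last exact: spr_nonnil E.
rewrite [X in _ <= X]mulrA; apply: ler_wpM2r; first exact: gpr_ge0.
rewrite /FF; case: ifP => rs; last by rewrite /PhiPsi mul0r.
rewrite /PhiPsi mulr0 addr0.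
set S := size (spreaders c).
set N := Nroot d c.
have S1 : (1 <= S)%N by rewrite lt0n size_eq0; exact: spr_nonnil E.
have Ss : (S <= s)%N.
  by apply: leq_trans ss; rewrite /S size_filter count_size.
have hx : K / 2 ^+ N.+1 = (K / 2 ^+ N) / 2 by rewrite exprS invfM; ring.
rewrite hx.
have D0 : 0 < (d.+1)%:R :> R by rewrite ltr0n.
apply: step_ineq.
- by apply: divr_ge0 => //; apply: exprn_ge0.
- by apply: mulr_ge0; rewrite ?invr_ge0 ler0n.
- rewrite mulrC ler_pdivrMr // mul1r ler_nat; exact: leq_subr.
- by rewrite invr_gt0 ltr0n.
- by rewrite invf_le1 ?ler1n ?ltr0n.
- have Sp : 0 < S%:R :> R by rewrite ltr0n.
  have sp : 0 < s%:R :> R by rewrite ltr0n.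
  have : (s%:R)^-1 <= (S%:R)^-1 :> R.
    by rewrite lef_pV2 ?posrE // ler_nat.
  rewrite invfM; lra.
Qed.

End Expect.


Lemma cvg_bound (R : realType) (u : nat -> R) (L C : R) : 0 < C ->
  (forall n, `|L - u n| <= C * gpr R 1 n) -> u @ \oo --> L.
Proof.
move=> C0 H; apply/cvgrPdist_le => eps e0.
set M := Num.Def.archi_bound ((C / eps) ^+ 2).
have hM : (C / eps) ^+ 2 < M%:R.
  by apply: archi_boundP; apply: sqr_ge0.
exists M => // n /= Mn.
apply: le_trans (H n) _.
have g0 := gpr_ge0 R n (isT : (0 < 1)%N).
have gs := gpr_sq R n (isT : (0 < 1)%N).
rewrite add1n in gs.
set g := gpr R 1 n in g0 gs *.
have nM : M%:R <= n%:R :> R by rewrite ler_nat.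
have n1 : (n.+1)%:R = n%:R + 1 :> R by rewrite -addn1 natrD.
rewrite n1 in gs.
have np : 0 < n%:R + 1 :> R by have := ler0n R n; lra.
have gs' : g ^+ 2 * (n%:R + 1) <= 1.
  by rewrite -ler_pdivlMr // mul1r.
have z : C / eps * eps = C by rewrite mulfVK // gt_eqF.
set y := C / eps in hM z.
rewrite leNgt; apply/negP => Hc.
have y0 : 0 < y by rewrite /y divr_gt0.
have hyy : y * y < n%:R + 1 by rewrite -expr2; lra.
have h1 : eps * eps < (C * g) * (C * g) by nra.
have h2 : eps * eps * (y * y) < eps * eps * (n%:R + 1).
  by rewrite ltr_pM2l //; nra.
have h3 : eps * eps * (y * y) = C * C by rewrite -z; ring.
have h4 : (C * g) * (C * g) * (n%:R + 1) <= C * C.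
  have -> : (C * g) * (C * g) * (n%:R + 1) = C * C * (g ^+ 2 * (n%:R + 1)) by ring.
  by rewrite ler_piMr //; nra.
have h5 : eps * eps * (n%:R + 1) < (C * g) * (C * g) * (n%:R + 1).
  by rewrite ltr_pM2r.
lra.
Qed.

Section Final.
Variable R : realType.
Variable d i : nat.
Hypothesis i1 : (1 <= i)%N.
Hypothesis id : (i <= d.+1)%N.

Definition hfun (k : nat) : R :=
  if (k <= i)%N then ((d.+1 - k) ^_ (i - k))%:R * i%:R / (d.+1)%:R ^+ (i - k).+1
  else 0.

Definition Phih (b : bool) (N : nat) : R :=
  if b then hfun N else if N == i then 1 else 0.

Lemma D0 : (d.+1)%:R != 0 :> R. Proof. by rewrite pnatr_eq0. Qed.

Lemma hfun_harm N : (N <= d.+1)%N ->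
  (d.+1)%:R^-1 * ((d.+1 - N)%:R * Phih true N.+1 + N%:R * Phih false N) = Phih true N.
Proof.
move=> Nd; rewrite /Phih /hfun.
case: (ltngtP N i) => Ni.
- rewrite mulr0 addr0.
  have Nd' : (N <= d)%N by rewrite -ltnS (leq_trans Ni id).
  have -> : (i - N = (i - N.+1).+1)%N by rewrite subnSK.
  have -> : (d.+1 - N = (d - N).+1)%N by rewrite subSn.
  rewrite subSS ffactSS natrM [in RHS]exprS.
  field; rewrite expf_neq0 ?D0 //=; apply: lt0r_neq0; have := ler0n R d; lra.
- by rewrite !mulr0 addr0 mulr0.
- rewrite Ni subnn ffactn0 expr1 mulr0 add0r mulr1 mul1r mulrC.
  by [].
Qed.

Lemma expn_mono a b m : (a <= b)%N -> (a ^ m <= b ^ m)%N.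
Proof. by case: m => [|m] ab; [rewrite !expn0 | rewrite leq_exp2r]. Qed.

Lemma ffact_le_exp n m : (n ^_ m <= n ^ m)%N.
Proof.
elim: m n => [|m IH] n; first by rewrite ffactn0 expn0.
rewrite ffactnS expnS leq_mul2l; apply/orP; right.
apply: leq_trans (IH _) _; apply: expn_mono; exact: leq_pred.
Qed.

Lemma hfun_ge0 k : 0 <= hfun k.
Proof.
rewrite /hfun; case: ifP => // _.
Qed.

Lemma hfun_le1 k : hfun k <= 1.
Proof.
rewrite /hfun; case: ifP => // _.
rewrite ler_pdivrMr ?exprn_gt0 ?ltr0n // mul1r -natrM -natrX ler_nat expnSr.
apply: leq_mul => //.
apply: leq_trans (ffact_le_exp _ _) _; apply: expn_mono; exact: leq_subr.
Qed.

Lemma Nroot_init : Nroot d init_config = 0%N.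
Proof.
apply/eqP; rewrite -leqn0 leqNgt -has_count; apply/hasP => -[v vr] /=.
have : v != Defs.root by apply: contraNneq (vroot_notin_rn d) => <-.
by move=> /negbTE ->.
Qed.

Lemma hfun0 : hfun 0 = i`!%:R * 'C(d.+1, i)%:R * i%:R / (d.+1)%:R ^+ i.+1.
Proof. by rewrite /hfun leq0n !subn0 -bin_ffact natrM (mulrC ('C(_, _))%:R). Qed.

End Final.

Theorem lemma1 (R : realType) (d : nat) : (2 <= d)%N ->
  (forall i : nat, (1 <= i <= d.+1)%N ->
     (fun n => probN R d n (pred1 i)) @ \oo -->
       (i`!%:R * 'C(d.+1, i)%:R * i%:R / (d.+1)%:R ^+ i.+1 : R))
  /\ (fun n => probN R d n (fun k => (1 <= k <= d.+1)%N)) @ \oo --> (1 : R).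
Proof.
move=> d2; set K : R := 2 ^+ d.+1.
have K0 : 0 < K by rewrite /K exprn_gt0.
have Psi_init : FF d (PhiPsi K) init_config = K.
  by rewrite /FF /PhiPsi Nroot_init /= ?eqxx expr0 divr1.
have bound : forall (f g : config -> R),
    (forall c, minv d c -> `|f c - g c| <= FF d (PhiPsi K) c) ->
    forall n, `|expect d n f init_config - expect d n g init_config| <= K * gpr R 1 n.
  move=> f g H n; apply: le_trans (expect_cmp H n (inv_init d)) _.
  rewrite -[X in X * _]Psi_init; apply: psi_bound => //; [exact: ltW | exact: inv_init].
have Kbig : forall c, 1 <= K / 2 ^+ (Nroot d c).
  move=> c; rewrite ler_pdivlMr ?exprn_gt0 // mul1r /K.
  have : ((2 ^ Nroot d c)%N%:R : R) <= (2 ^ d.+1)%N%:R.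
    by rewrite ler_nat leq_exp2l // Nroot_le.
  by rewrite !natrX.
split.
  move=> i /andP [i1 id].
  apply: (@cvg_bound R _ _ K) => // n.
  have he := @expect_harm R d (Phih R d i) (@hfun_harm R d i id) n init_config (inv_init d).
  have hi : FF d (Phih R d i) init_config = hfun R d i 0.
    by rewrite /FF /Phih Nroot_init /= ?eqxx.
  rewrite -hfun0 // -hi -he distrC /probN; apply: bound => c ic.
  rewrite /FF /Phih /PhiPsi; case rs: (st c Defs.root == 0).
    apply: le_trans (Kbig c).
    have := hfun_ge0 R d i (Nroot d c); have := @hfun_le1 R d i id (Nroot d c).
    by case: ifP => _ h1 h0; rewrite ler_norml; apply/andP; split; lra.
  by rewrite /= subrr normr0.
apply: (@cvg_bound R _ _ K) => // n.
have he : expect d n (FF d (fun _ _ => 1)) init_config = 1 :> R.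
  rewrite (@expect_harm R d (fun _ _ => 1)) //; last exact: inv_init.
  move=> N Nd; rewrite !mulr1 -natrD subnK // mulVf //; exact: D0.
rewrite -{1}he /probN.
rewrite distrC; apply: bound => c ic.
rewrite /FF /PhiPsi; case rs: (st c Defs.root == 0).
  apply: le_trans (Kbig c).
  by case: ifP => _; rewrite ?subrr ?normr0 ?ler01 // sub0r normrN normr1.
case: ic => _ _ _ _ /(_ (negbT rs)) I5.
by rewrite I5 Nroot_le /= subrr normr0.
Qed.
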